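(* Let $G$ be a path-pairable graph on $n$ vertices with diameter $d \geq 20$, and let $x,y$ be vertices with $d(x,y)=d$. For $0\le i\le d$ let $S_i=\{z\in V(G): d(x,z)=i\}$, and define $A=\bigcup_{i=0}^{\lceil d/3\rceil}S_i$ and $C=\bigcup_{i=\lfloor 2d/3\rfloor}^{d}S_i$. Then $|A|\geq \min\left(\frac{n}{2},\frac{d^2}{100}\right)$ and $|C|\geq \min\left(\frac{n}{2},\frac{d^2}{100}\right)$.
   Context: A graph $G$ on $n=2m$ vertices is path-pairable if for every partition of its vertex set into $m$ pairs $\{x_1,y_1\},\dots,\{x_m,y_m\}$ there exist pairwise edge-disjoint paths $P_1,\dots,P_m$ such that $P_i$ joins $x_i$ to $y_i$ for each $i$. $d(u,v)$ denotes the graph distance between vertices $u$ and $v$; the diameter is the maximum distance between two vertices. *)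

(* Defs.v *)
(* Simple graph: symmetric irreflexive relation e on a finType. *)
From mathcomp Require Import all_boot all_order all_algebra.
Set Implicit Arguments. Unset Strict Implicit. Unset Printing Implicit Defensive.
Import Order.TTheory GRing.Theory Num.Theory.

Section Graph.
Variable T : finType.
Variable e : rel T.

Definition ball (u : T) (k : nat) : {set T} :=
  iter k (fun B => B :|: [set z | [exists w in B, e w z]]) [set u].

(* graph distance: least k with v in ball u k (junk value #|T| if unreachable) *)
Definition dist (u v : T) : nat := find (fun k => v \in ball u k) (iota 0 #|T|).

Definition gconnected : Prop := forall u v : T, connect e u v.

Definition diameter : nat := \max_(uv : T * T) dist uv.1 uv.2.

Definition sphere (x : T) (i : nat) : {set T} := [set z | dist x z == i].

Definition is_gpath (u v : T) (p : seq T) : bool :=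
  [&& path e u p, uniq (u :: p) & last u p == v].

Definition pedges (u : T) (p : seq T) : seq {set T} :=
  [seq [set a.1; a.2] | a <- zip (u :: p) p].

(* a partition of the vertex set into pairs {v, f v} *)
Definition pairing (f : T -> T) : Prop := forall v, f v != v /\ f (f v) = v.

(* path-pairable: n is even and for every partition into pairs there are
   pairwise edge-disjoint paths joining each pair (P v is a path for the
   pair {v, f v}; paths of distinct pairs share no edge). *)
Definition path_pairable : Prop :=
  ~~ odd #|T| /\
  forall f : T -> T, pairing f ->
    exists P : T -> seq T,
      (forall v, is_gpath v (f v) (P v)) /\
      (forall v w, [set v; f v] != [set w; f w] ->
         forall E, E \in pedges v (P v) -> E \notin pedges w (P w)).
End Graph.

(* Main.v *)
Require Import Defs.
From mathcomp Require Import all_boot all_order all_algebra.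
Import Order.TTheory GRing.Theory Num.Theory.
From mathcomp Require Import all_boot all_order all_algebra zify.
Set Implicit Arguments. Unset Strict Implicit. Unset Printing Implicit Defensive.
From mathcomp Require Import lra.

Definition partner j := if odd j then j.-1 else j.+1.

Lemma partnerP j q : j < q.*2 ->
  [/\ partner j < q.*2, partner (partner j) = j & partner j != j].
Proof.
rewrite /partner -(odd_double_half j).
case: (odd j) => /=; rewrite ?add0n ?add1n.
  rewrite /= odd_double /=. move=> h; split; try lia.
  by rewrite /= odd_double /=.
rewrite odd_double /= => h; split.
- rewrite -!muln2 in h *. lia.
- by rewrite /= odd_double.
- lia.
Qed.

Section P.
Variable T : finType.

Lemma exists_pairing (A : {set T}) : ~~ odd #|T| -> #|A| <= #|~: A| ->
  exists f, pairing f /\ forall v, v \in A -> f v \notin A.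
Proof.
move=> hev hle.
set la := enum A; set lc := enum (~: A).
have ula : uniq la := enum_uniq _.
have ulc : uniq lc := enum_uniq _.
have sla : size la = #|A| by rewrite cardE.
have slc : size lc = #|~: A| by rewrite cardE.
have mla z : (z \in la) = (z \in A) by rewrite mem_enum.
have mlc z : (z \in lc) = (z \notin A) by rewrite mem_enum inE.
set k := #|A|; set L := #|~: A|.
have [q hq] : exists q, L = k + q.*2.
  have hT := cardsC A. rewrite -hT oddD in hev.
  have hodd : odd (L - k) = false.
    rewrite oddB //. by move: hev; rewrite -/k -/L; case: (odd k); case: (odd L).
  exists (L - k)./2. have := odd_double_half (L - k). rewrite hodd add0n => ->. lia.
pose f v := if v \in A then nth v lc (index v la)
            else if index v lc < k then nth v la (index v lc)
            else nth v lc (k + partner (index v lc - k)).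
exists f; split; last first.
  move=> v vA; rewrite /f vA -mlc mem_nth // slc.
  have : index v la < size la by rewrite index_mem mla.
  rewrite sla; lia.
move=> v; rewrite /f.
case vA: (v \in A).
  have hi : index v la < k by rewrite /k -sla index_mem mla.
  have hfv : nth v lc (index v la) \in lc by rewrite mem_nth // slc; lia.
  have hfA : nth v lc (index v la) \in A = false by apply/negbTE; rewrite -mlc.
  split; first by apply/eqP=> h; rewrite h vA in hfA.
  rewrite hfA index_uniq ?slc //; last lia.
  rewrite hi (set_nth_default v) ?sla // nth_index // mla //.
have hiv : index v lc < L by rewrite /L -slc index_mem mlc vA.
case: ifP => hik.
  have hfv : nth v la (index v lc) \in A by rewrite -mla mem_nth // sla.
  split; first by apply/eqP=> h; rewrite h vA in hfv.
  rewrite hfv index_uniq ?sla //.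
  rewrite (set_nth_default v) ?slc // nth_index // mlc vA //.
have hj : index v lc - k < q.*2 by move/negbT: hik; rewrite -ltnNge; lia.
have [hp1 hp2 hp3] := partnerP hj.
set j := partner _ in hp1 hp2 hp3 *.
have hfv : nth v lc (k + j) \in lc by rewrite mem_nth // slc; lia.
have hfA : nth v lc (k + j) \in A = false by apply/negbTE; rewrite -mlc.
have hidx : index (nth v lc (k + j)) lc = k + j by rewrite index_uniq // slc; lia.
split.
  apply/eqP=> h. have := congr1 (fun z => index z lc) h. rewrite /= hidx. 
  move: hp3 => /eqP; lia.
rewrite hfA hidx.
have -> : (k + j < k) = false by lia.
rewrite addKn hp2 subnKC; last lia.
by rewrite (set_nth_default v) ?slc // nth_index // mlc vA.
Qed.
End P.

Lemma seq_growth (a s : nat -> nat) k : 1 <= a 0 ->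
  (forall i, i < k -> a i.+1 = a i + s i.+1) ->
  (forall i, i < k -> a i <= s i * s i.+1) -> (k./2).+1 ^ 2 <= a k.
Proof.
move=> h0 hrec hcut.
have mono : forall i j, i <= j -> j <= k -> a i <= a j.
  move=> i j hij; elim: j hij => [|j IH] hij hjk.
    by rewrite leqn0 in hij; rewrite (eqP hij).
  rewrite leq_eqVlt in hij; case/orP: hij => [/eqP -> //| hij].
  rewrite hrec //; apply: leq_trans (IH hij (ltnW hjk)) _; exact: leq_addr.
have key : forall j, j.*2 <= k -> j.+1 ^ 2 <= a j.*2.
  elim=> [|j IH] hj; first by [].
  have hj' : j.*2 <= k by rewrite doubleS in hj; lia.
  have IH' := IH hj'.
  have c0 := hcut j.*2 (_ : j.*2 < k).
  have c1 := hcut j.*2.+1 (_ : j.*2.+1 < k).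
  have r0 := hrec j.*2 (_ : j.*2 < k).
  have r1 := hrec j.*2.+1 (_ : j.*2.+1 < k).
  rewrite doubleS in hj *.
  have {c0 c1 r0 r1} [c0 c1 r0 r1] : [/\ a j.*2 <= s j.*2 * s j.*2.+1,
     a j.*2.+1 <= s j.*2.+1 * s j.*2.+2, a j.*2.+1 = a j.*2 + s j.*2.+1 &
     a j.*2.+2 = a j.*2.+1 + s j.*2.+2].
    split; [apply: c0|apply: c1|apply: r0|apply: r1]; lia.
  move: IH' c0 c1 r0 r1.
  set A0 := a j.*2; set A1 := a j.*2.+1; set A2 := a j.*2.+2.
  set S0 := s j.*2; set S1 := s j.*2.+1; set S2 := s j.*2.+2.
  move=> IH' c0 c1 r0 r1.
  have hS1 : 0 < S1.
    rewrite lt0n; apply/eqP=> h; move: c0; rewrite h muln0; lia.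
  have hA1 : j.+1 ^ 2 < A1 by lia.
  have hsum : j.+1.*2 < S1 + S2.
    rewrite ltnNge; apply/negP=> hle.
    have h1 : 4 * (S1 * S2) <= (S1 + S2) * (S1 + S2).
      case: (leqP S1 S2) => h.
        rewrite -(subnKC h); set t := S2 - S1; nia.
      rewrite -(subnKC (ltnW h)); set t := S1 - S2; nia.
    have h2 : (S1 + S2) * (S1 + S2) <= (j.+1.*2) * (j.+1.*2) by apply: leq_mul.
    rewrite -mul2n in h2. lia.
  nia.
have := key k./2 (_ : k./2.*2 <= k).
have h2 : k./2.*2 <= k by rewrite -{2}(odd_double_half k); lia.
move/(_ h2) => hk; apply: leq_trans hk _; apply: mono => //.
Qed.
Section C.
Variable T : finType.
Lemma cut_bound (A Y : {set T}) (f : T -> T) (P : T -> seq T) (Cross : {set {set T}}) :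
  (forall v w, [set v; f v] != [set w; f w] ->
     forall E, E \in pedges v (P v) -> E \notin pedges w (P w)) ->
  Y \subset A -> (forall v, v \in A -> f v \notin A) ->
  (forall v, v \in Y -> exists E, (E \in pedges v (P v)) && (E \in Cross)) ->
  #|Y| <= #|Cross|.
Proof.
move=> hdis hYA hfA H.
pose g v := odflt set0 [pick E | (E \in pedges v (P v)) && (E \in Cross)].
have gP : forall v, v \in Y -> (g v \in pedges v (P v)) && (g v \in Cross).
  move=> v vY; rewrite /g; case: pickP => [E //|h].
  by have [E hE] := H v vY; rewrite h in hE.
rewrite -(card_in_imset (f:=g)).
  apply: subset_leq_card; apply/subsetP => E /imsetP [v vY ->].
  by case/andP: (gP v vY).
move=> v w vY wY hg; apply/eqP; apply/negP => hne.
have vA : v \in A by apply: (subsetP hYA).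
have wA : w \in A by apply: (subsetP hYA).
have hs : [set v; f v] != [set w; f w].
  apply/negP => /eqP hs.
  have : v \in [set w; f w] by rewrite -hs set21.
  rewrite !inE => /orP [/eqP hv| /eqP hv]; first by rewrite hv eqxx in hne.
  by move: (hfA w wA); rewrite -hv vA.
have := hdis v w hs (g v) (proj1 (andP (gP v vY))).
by rewrite hg (proj1 (andP (gP w wY))).
Qed.
End C.

Section G.
Variable T : finType.
Variable e : rel T.

Lemma dist_edge x u w : e u w -> dist e x w <= (dist e x u).+1.
Proof.
move=> euw; rewrite /dist; set p := fun k => _.
set D := find (fun k => u \in ball e x k) _.
have hs := find_size (fun k => w \in ball e x k) (iota 0 #|T|).
rewrite size_iota in hs.
case: (ltnP D #|T|) => hD; last by apply: leq_trans hs _; apply: leqW.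
case: (ltnP D.+1 #|T|) => hD1; last by apply: leq_trans hs _.
have hu : u \in ball e x D.
  have := nth_find 0 (_ : has (fun k => u \in ball e x k) (iota 0 #|T|)).
  rewrite -/D nth_iota //; apply; by rewrite has_find size_iota.
have hw : w \in ball e x D.+1.
  rewrite /ball iterS -/(ball e x D) inE; apply/orP; right.
  rewrite inE; apply/existsP; exists u; by rewrite hu.
rewrite leqNgt; apply/negP => hlt.
have := before_find 0 hlt; rewrite nth_iota // add0n. by rewrite /p hw.
Qed.

Lemma dist_self x : dist e x x = 0.
Proof.
rewrite /dist.
have hT : 0 < #|T| by apply/card_gt0P; exists x.
case: #|T| hT => // n _ /=.
by rewrite /ball /= inE eqxx.
Qed.

Lemma mem_bigcup_nat (F : nat -> {set T}) m n z :
  (z \in \bigcup_(m <= i < n) F i) = has (fun i => z \in F i) (index_iota m n).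
Proof.
elim: (index_iota m n) => [|i s IH]; first by rewrite big_nil inE.
by rewrite big_cons inE IH.
Qed.

Lemma crossing (phi : pred T) v p :
  path e v p -> phi v -> ~~ phi (last v p) ->
  exists a b, [/\ (a, b) \in zip (v :: p) p, e a b, phi a & ~~ phi b].
Proof.
elim: p v => [|w p IH] v /=; first by move=> _ ->.
case/andP=> evw hp hv hl.
case hw: (phi w).
  have [a [b [h1 h2 h3 h4]]] := IH w hp hw hl.
  by exists a, b; split => //; rewrite inE h1 orbT.
by exists v, w; rewrite inE eqxx hw.
Qed.


Lemma ball_bound (pp : path_pairable e) x k :
  #|[set z | dist e x z <= k]|.*2 < #|T| ->
  (k./2).+1 ^ 2 <= #|[set z | dist e x z <= k]|.
Proof.
move=> hsmall.
set B := fun i => [set z | dist e x z <= i].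
have hC := cardsC (B k).
have hle : #|B k| <= #|~: B k| by rewrite -/(B k) in hsmall; lia.
have [f [hf hfA]] := exists_pairing (proj1 pp) hle.
have [P [hP hdis]] := proj2 pp f hf.
apply: (seq_growth (a := fun i => #|B i|) (s := fun i => #|sphere e x i|)).
- apply/card_gt0P; exists x; by rewrite inE dist_self.
- move=> i _.
  have -> : B i.+1 = B i :|: sphere e x i.+1.
    by apply/setP=> z; rewrite !inE leq_eqVlt ltnS orbC eq_sym.
  rewrite cardsU.
  have -> : B i :&: sphere e x i.+1 = set0.
    apply/setP=> z; rewrite !inE; apply/negP => /andP [h1 /eqP h2]; lia.
  by rewrite cards0 subn0.
move=> i hik.
set Cross := [set [set p.1; p.2] | p in setX (sphere e x i) (sphere e x i.+1)].
apply: (@leq_trans #|Cross|); last first.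
  by apply: leq_trans (leq_imset_card _ _) _; rewrite cardsX.
apply: (cut_bound (A := B k) hdis).
- apply/subsetP=> z; rewrite !inE; lia.
- by [].
move=> v vB.
have /and3P [hpath _ /eqP hlast] := hP v.
have hBB : B i \subset B k by apply/subsetP=> z; rewrite !inE; lia.
have hfv := hfA v (subsetP hBB v vB).
have h1 : dist e x v <= i by move: vB; rewrite inE.
have h2 : ~~ (dist e x (last v (P v)) <= i).
  rewrite hlast -ltnNge. move: hfv; rewrite inE -ltnNge. lia.
have [a [b [hab eab ha hb]]] := crossing (phi := fun z => dist e x z <= i) hpath h1 h2.
exists [set a; b]; apply/andP; split.
  by apply/mapP; exists (a, b).
have hd := dist_edge x eab.
apply/imsetP; exists (a, b) => //.
rewrite !inE /=; apply/andP; split; apply/eqP; move: hb; rewrite /= -ltnNge; move: ha => /=; lia.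
Qed.

Lemma far_bound (e_sym : symmetric e) (pp : path_pairable e) x y d k :
  dist e x y = d -> k <= d ->
  #|[set z | d - k <= dist e x z]|.*2 < #|T| ->
  (k./2).+1 ^ 2 <= #|[set z | d - k <= dist e x z]|.
Proof.
move=> hy hkd hsmall.
set B := fun i => [set z | d - i <= dist e x z].
have hC := cardsC (B k).
have hle : #|B k| <= #|~: B k| by rewrite -/(B k) in hsmall; lia.
have [f [hf hfA]] := exists_pairing (proj1 pp) hle.
have [P [hP hdis]] := proj2 pp f hf.
apply: (seq_growth (a := fun i => #|B i|) (s := fun i => #|sphere e x (d - i)|)).
- apply/card_gt0P; exists y; by rewrite inE hy subn0.
- move=> i hik.
  have -> : B i.+1 = B i :|: sphere e x (d - i.+1).
    apply/setP=> z; rewrite !inE.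
    case: (ltngtP (dist e x z) (d - i.+1)) => h; rewrite ?h ?eqxx ?orbT.
    + apply/esym/negbTE; rewrite negb_or; apply/andP; split; lia.
    + lia.
    + lia.
  rewrite cardsU.
  have -> : B i :&: sphere e x (d - i.+1) = set0.
    apply/setP=> z; rewrite !inE; apply/negP => /andP [h1 /eqP h2]; lia.
  by rewrite cards0 subn0.
move=> i hik.
set Cross := [set [set p.1; p.2] | p in setX (sphere e x (d - i)) (sphere e x (d - i.+1))].
apply: (@leq_trans #|Cross|); last first.
  by apply: leq_trans (leq_imset_card _ _) _; rewrite cardsX.
apply: (cut_bound (A := B k) hdis).
- apply/subsetP=> z; rewrite !inE; lia.
- by [].
move=> v vB.
have /and3P [hpath _ /eqP hlast] := hP v.
have hBB : B i \subset B k by apply/subsetP=> z; rewrite !inE; lia.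
have hfv := hfA v (subsetP hBB v vB).
have h1 : d - i <= dist e x v by move: vB; rewrite inE.
have h2 : ~~ (d - i <= dist e x (last v (P v))).
  rewrite hlast -ltnNge. move: hfv; rewrite inE -ltnNge. lia.
have [a [b [hab eab ha hb]]] := crossing (phi := fun z => d - i <= dist e x z) hpath h1 h2.
exists [set a; b]; apply/andP; split.
  by apply/mapP; exists (a, b).
have hd := dist_edge x (_ : e b a).
rewrite e_sym in hd; have {}hd := hd eab.
apply/imsetP; exists (a, b) => //.
rewrite !inE /=; apply/andP; split; apply/eqP; move: hb; rewrite /= -ltnNge; move: ha => /=; lia.
Qed.
End G.

Lemma arith d k a : d <= 3 * k -> (k./2).+1 ^ 2 <= a -> d ^ 2 <= 100 * a.
Proof.
move=> hd ha.
have hk : k < (k./2).+1 * 2 by have := odd_double_half k; rewrite -muln2; case: (odd k) => /=; lia.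
set h := (k./2).+1 in hk ha.
have : d < 6 * h by lia.
nia.
Qed.

Import Order.TTheory GRing.Theory Num.Theory.

Lemma final_rat (n d a : nat) : (n <= a.*2 \/ d ^ 2 <= 100 * a) ->
  (Num.min (n%:R / 2) ((d%:R ^+ 2) / 100) <= (a%:R : rat))%R.
Proof.
move=> [h|h]; rewrite ge_min; apply/orP; [left|right].
  have : (n%:R <= 2 * a%:R :> rat)%R by rewrite -natrM ler_nat; lia.
  lra.
have : ((d%:R ^+ 2) <= 100 * a%:R :> rat)%R by rewrite -natrX -natrM ler_nat.
set D := (d%:R ^+ 2)%R. lra.
Qed.

Unset Implicit Arguments.
Theorem lemma2 (T : finType) (e : rel T) (e_sym : symmetric e)
  (e_irr : irreflexive e) (x y : T) (d : nat) :
  path_pairable e -> gconnected e -> diameter e = d -> 20 <= d ->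
  dist e x y = d ->
  let A := \bigcup_(0 <= i < ((d + 2) %/ 3).+1) sphere e x i in
  let C := \bigcup_((2 * d) %/ 3 <= i < d.+1) sphere e x i in
  (Num.min (#|T|%:R / 2) ((d%:R ^+ 2) / 100) <= (#|A|%:R : rat))%R /\
  (Num.min (#|T|%:R / 2) ((d%:R ^+ 2) / 100) <= (#|C|%:R : rat))%R.
Proof.
move=> pp _ hdiam _ hy A C.
have hmax z : dist e x z <= d.
  rewrite -hdiam /diameter; exact: (leq_bigmax (x, z)).
set K := (d + 2) %/ 3.
set Kc := d - (2 * d) %/ 3.
have hA : A = [set z | dist e x z <= K].
  apply/setP=> z; rewrite /A mem_bigcup_nat inE.
  rewrite (eq_has (a2 := pred1 (dist e x z))); last by move=> i; rewrite inE eq_sym.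
  by rewrite has_pred1 mem_index_iota.
have hC : C = [set z | d - Kc <= dist e x z].
  apply/setP=> z; rewrite /C mem_bigcup_nat inE.
  rewrite (eq_has (a2 := pred1 (dist e x z))); last by move=> i; rewrite inE eq_sym.
  rewrite has_pred1 mem_index_iota; have := hmax z; rewrite /Kc; lia.
split; apply: final_rat.
  case: (leqP #|T| #|A|.*2) => h; [by left|right].
  rewrite hA in h *; apply: (arith (k := K)); first by rewrite /K; lia.
  exact: ball_bound.
case: (leqP #|T| #|C|.*2) => h; [by left|right].
rewrite hC in h *; apply: (arith (k := Kc)); first by rewrite /Kc; lia.
have hkd : Kc <= d by rewrite /Kc; lia.
exact: (far_bound e_sym pp hy hkd h).
Qed.
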